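(* The Kudryashov–Sinelshchikov equation $$u_t+uu_x-(1+u)u_{xx}-u_x^2=0$$ is nonlinearly self-adjoint with the substitution $$\phi(t,x,u)=c_1\exp(-t-x)+c_2,$$ where $c_1,c_2$ are constants with $(c_1,c_2)\neq(0,0)$. It is not strictly self-adjoint.
   Context: For a differential equation $\mathfrak{F}[u]=0$ in independent variables $t,x$ and dependent variable $u$, introduce a new dependent variable $\nu=\nu(t,x)$. The formal Lagrangian is $\mathfrak{L}=\nu\mathfrak{F}$ and the adjoint is $\mathfrak{F}^*=\frac{\delta\mathfrak{L}}{\delta u}$, where $\frac{\delta}{\delta u}=\frac{\partial}{\partial u}-D_t\frac{\partial}{\partial u_t}-D_x\frac{\partial}{\partial u_x}+D_x^2\frac{\partial}{\partial u_{xx}}$ and $D_t,D_x$ are total derivatives. The equation is nonlinearly self-adjoint if there is a substitution $\nu=\phi(t,x,u)\neq 0$ (derivatives of $\nu$ replaced by total derivatives of $\phi$) such that $\mathfrak{F}^*|_{\nu=\phi}=\lambda\mathfrak{F}$ for some coefficient $\lambda=\lambda(t,x,u,\dots)$; it is strictly self-adjoint if this holds with $\phi=u$. *)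

(* Defs.v *)
From Stdlib Require Import Reals List.
From Coquelicot Require Import Coquelicot.
Open Scope R_scope.

Definition Dt (g : R -> R -> R) (t x : R) : R := Derive (fun s => g s x) t.
Definition Dx (g : R -> R -> R) (t x : R) : R := Derive (fun y => g t y) x.

Fixpoint pder (w : list bool) (g : R -> R -> R) : R -> R -> R :=
  match w with
  | nil => g
  | b :: w' => (if b then Dt else Dx) (pder w' g)
  end.

Definition smooth2 (g : R -> R -> R) : Prop :=
  forall (w : list bool) (t x : R),
    ex_derive (fun s => pder w g s x) t /\
    ex_derive (fun y => pder w g t y) x /\
    continuous (fun p : R * R => pder w g (fst p) (snd p)) (t, x).

Definition jet (u : R -> R -> R) (t x : R) : nat -> nat -> R :=
  fun i j => Nat.iter i Dt (Nat.iter j Dx u) t x.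

(** A second-order differential function F(t,x,u,u_t,u_x,u_xx) is given as
    a real function of these six jet coordinates. *)
Definition diff_fun := R -> R -> R -> R -> R -> R -> R.

Definition Feval (F : diff_fun) (u : R -> R -> R) (t x : R) : R :=
  F t x (u t x) (Dt u t x) (Dx u t x) (Dx (Dx u) t x).

Definition Lag (F : diff_fun) (nu t x u0 ut ux uxx : R) : R :=
  nu * F t x u0 ut ux uxx.

Definition dL_u (F : diff_fun) (u nu : R -> R -> R) (t x : R) : R :=
  Derive (fun y => Lag F (nu t x) t x y (Dt u t x) (Dx u t x) (Dx (Dx u) t x))
    (u t x).
Definition dL_ut (F : diff_fun) (u nu : R -> R -> R) (t x : R) : R :=
  Derive (fun y => Lag F (nu t x) t x (u t x) y (Dx u t x) (Dx (Dx u) t x))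
    (Dt u t x).
Definition dL_ux (F : diff_fun) (u nu : R -> R -> R) (t x : R) : R :=
  Derive (fun y => Lag F (nu t x) t x (u t x) (Dt u t x) y (Dx (Dx u) t x))
    (Dx u t x).
Definition dL_uxx (F : diff_fun) (u nu : R -> R -> R) (t x : R) : R :=
  Derive (fun y => Lag F (nu t x) t x (u t x) (Dt u t x) (Dx u t x) y)
    (Dx (Dx u) t x).

(** Adjoint F* = dL/du - D_t dL/du_t - D_x dL/du_x + D_x^2 dL/du_xx,
    evaluated along u(t,x), nu(t,x): total derivatives become partial
    derivatives of the composed functions of (t,x). *)
Definition adjoint (F : diff_fun) (u nu : R -> R -> R) (t x : R) : R :=
  dL_u F u nu t x
  - Dt (dL_ut F u nu) t x
  - Dx (dL_ux F u nu) t x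
  + Dx (Dx (dL_uxx F u nu)) t x.

Definition self_adjoint_with (F : diff_fun) (phi : R -> R -> R -> R) : Prop :=
  (exists t x w, phi t x w <> 0) /\
  exists lam : R -> R -> (nat -> nat -> R) -> R,
    forall u : R -> R -> R, smooth2 u ->
      forall t x : R,
        adjoint F u (fun t' x' => phi t' x' (u t' x')) t x
        = lam t x (jet u t x) * Feval F u t x.

Definition strictly_self_adjoint (F : diff_fun) : Prop :=
  self_adjoint_with F (fun _ _ w => w).

Definition KS : diff_fun :=
  fun _ _ u0 ut ux uxx => ut + u0 * ux - (1 + u0) * uxx - ux ^ 2.

(* Main.v *)
Require Import Defs.
From Stdlib Require Import Reals Lra.
From Coquelicot Require Import Coquelicot.
Open Scope R_scope.

Lemma Dx_ext (f g : R -> R -> R) t x :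
  (forall y, f t y = g t y) -> Defs.Dx f t x = Defs.Dx g t x.
Proof. intros H; unfold Defs.Dx; apply Derive_ext; auto. Qed.

Lemma Dt_ext (f g : R -> R -> R) t x :
  (forall s, f s x = g s x) -> Defs.Dt f t x = Defs.Dt g t x.
Proof. intros H; unfold Defs.Dt; apply Derive_ext; auto. Qed.

Lemma pder_affine w : exists a b c, forall t x,
  pder w (fun t x => t + x) t x = a * t + b * x + c.
Proof.
  induction w as [|bb w IH]; simpl.
  - exists 1, 1, 0; intros; ring.
  - destruct IH as (a & b & c & H). destruct bb.
    + exists 0, 0, a. intros t x. rewrite (Dt_ext _ (fun s y => a * s + b * y + c)) by auto.
      unfold Defs.Dt. apply is_derive_unique. auto_derive; [auto| ring].
    + exists 0, 0, b. intros t x. rewrite (Dx_ext _ (fun s y => a * s + b * y + c)) by auto.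
      unfold Defs.Dx. apply is_derive_unique. auto_derive; [auto| ring].
Qed.

Lemma smooth_lin : smooth2 (fun t x => t + x).
Proof.
  intros w t x. destruct (pder_affine w) as (a & b & c & H).
  split; [|split].
  - apply (ex_derive_ext (fun s => a * s + b * x + c)).
    + intros; symmetry; apply H.
    + auto_derive; auto.
  - apply (ex_derive_ext (fun y => a * t + b * y + c)).
    + intros; symmetry; apply H.
    + auto_derive; auto.
  - apply (continuous_ext (fun p : R * R => plus (plus (mult a (fst p)) (mult b (snd p))) c)).
    + intros p; rewrite H; reflexivity.
    + apply (@continuous_plus _ R_AbsRing R_NormedModule
        (fun p : R * R => plus (mult a (fst p)) (mult b (snd p))) (fun _ => c)).
      2: apply continuous_const.
      apply (@continuous_plus _ R_AbsRing R_NormedModule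
        (fun p : R * R => mult a (fst p)) (fun p : R * R => mult b (snd p))).
      * apply (@continuous_mult _ R_AbsRing (fun _ => a) (fun p : R * R => fst p));
          [apply continuous_const| apply continuous_fst].
      * apply (@continuous_mult _ R_AbsRing (fun _ => b) (fun p : R * R => snd p));
          [apply continuous_const| apply continuous_snd].
Qed.

Ltac dcalc := apply is_derive_unique; auto_derive; [auto | try (unfold Rminus; ring)].

Lemma not_strict : ~ strictly_self_adjoint KS.
Proof.
  intros [_ [lam Hl]].
  pose (u := fun t x : R => t + x).
  specialize (Hl u smooth_lin 0 0).
  assert (DtU : forall t x, Defs.Dt u t x = 1) by (intros; unfold Defs.Dt, u; dcalc).
  assert (DxU : forall t x, Defs.Dx u t x = 1) by (intros; unfold Defs.Dx, u; dcalc).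
  assert (DxxU : forall t x, Defs.Dx (Defs.Dx u) t x = 0).
  { intros. rewrite (Dx_ext _ (fun _ _ => 1)) by (intros; apply DxU).
    unfold Defs.Dx; dcalc. }
  assert (F0 : Feval KS u 0 0 = 0).
  { unfold Feval, KS. rewrite DtU, DxU, DxxU. unfold u; ring. }
  assert (A1 : forall t x, dL_u KS u (fun t' x' => u t' x') t x = t + x).
  { intros. unfold dL_u, Lag, KS. rewrite DtU, DxU, DxxU. unfold u. dcalc. }
  assert (A2 : forall t x, dL_ut KS u (fun t' x' => u t' x') t x = t + x).
  { intros. unfold dL_ut, Lag, KS. rewrite DtU, DxU, DxxU. unfold u. dcalc. }
  assert (A3 : forall t x, dL_ux KS u (fun t' x' => u t' x') t x = (t + x) * (t + x - 2)).
  { intros. unfold dL_ux, Lag, KS. rewrite DtU, DxU, DxxU. unfold u. dcalc. }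
  assert (A4 : forall t x, dL_uxx KS u (fun t' x' => u t' x') t x = - ((t + x) * (1 + (t + x)))).
  { intros. unfold dL_uxx, Lag, KS. rewrite DtU, DxU, DxxU. unfold u. dcalc. }
  assert (B2 : Defs.Dt (dL_ut KS u (fun t' x' => u t' x')) 0 0 = 1).
  { rewrite (Dt_ext _ (fun t x => t + x)) by (intros; apply A2). unfold Defs.Dt; dcalc. }
  assert (B3 : Defs.Dx (dL_ux KS u (fun t' x' => u t' x')) 0 0 = -2).
  { rewrite (Dx_ext _ (fun t x => (t + x) * (t + x - 2))) by (intros; apply A3).
    unfold Defs.Dx; dcalc. }
  assert (B4' : forall y, Defs.Dx (dL_uxx KS u (fun t' x' => u t' x')) 0 y = - (1 + 2 * y)).
  { intros y. rewrite (Dx_ext _ (fun t x => - ((t + x) * (1 + (t + x))))) by (intros; apply A4).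
    unfold Defs.Dx; dcalc. }
  assert (B4 : Defs.Dx (Defs.Dx (dL_uxx KS u (fun t' x' => u t' x'))) 0 0 = -2).
  { rewrite (Dx_ext _ (fun _ y => - (1 + 2 * y))) by (intros; apply B4').
    unfold Defs.Dx; dcalc. }
  unfold adjoint in Hl. rewrite A1, B2, B3, B4, F0 in Hl.
  lra.
Qed.

Lemma pos_part (c1 c2 : R) : (c1, c2) <> (0, 0) ->
  self_adjoint_with KS (fun t x _ => c1 * exp (- t - x) + c2).
Proof.
  intros Hc. split.
  - destruct (Req_dec (c1 + c2) 0) as [E|E].
    + exists (-1), 0, 0. replace (- -1 - 0) with 1 by ring.
      assert (c1 <> 0).
      { intros Z. apply Hc. f_equal; lra. }
      assert (exp 0 < exp 1) by (apply exp_increasing; lra).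
      rewrite exp_0 in *.
      intros Z. replace c2 with (- c1) in Z by lra.
      assert (c1 * (exp 1 - 1) = 0) by lra.
      apply Rmult_integral in H1. destruct H1; lra.
    + exists 0, 0, 0. replace (-0-0) with 0 by ring. rewrite exp_0. lra.
  - exists (fun _ _ _ => 0). intros u Hs t x. rewrite Rmult_0_l.
    set (nu := fun t' x' : R => (fun t x _ => c1 * exp (- t - x) + c2) t' x' (u t' x')).
    assert (H0 : forall t y, ex_derive (fun y => u t y) y) by (intros t0 y; apply (Hs nil t0 y)).
    assert (H1 : forall t y, ex_derive (fun y => Defs.Dx u t y) y) by (intros t0 y; apply (Hs (cons false nil) t0 y)).
    assert (A1 : forall t x, dL_u KS u nu t x = nu t x * (Defs.Dx u t x - Defs.Dx (Defs.Dx u) t x)).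
    { intros. unfold dL_u, Lag, KS. dcalc. }
    assert (A2 : forall t x, dL_ut KS u nu t x = c1 * exp (- t - x) + c2).
    { intros. unfold dL_ut, Lag, KS, nu. dcalc. }
    assert (A3 : forall t x, dL_ux KS u nu t x = (c1 * exp (- t - x) + c2) * (u t x - 2 * Defs.Dx u t x)).
    { intros. unfold dL_ux, Lag, KS, nu. dcalc. }
    assert (A4 : forall t x, dL_uxx KS u nu t x = - ((c1 * exp (- t - x) + c2) * (1 + u t x))).
    { intros. unfold dL_uxx, Lag, KS, nu. dcalc. }
    assert (B2 : Defs.Dt (dL_ut KS u nu) t x = - c1 * exp (- t - x)).
    { rewrite (Dt_ext _ (fun t x => c1 * exp (- t - x) + c2)) by (intros; apply A2).
      unfold Defs.Dt; dcalc. }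
    assert (B3 : Defs.Dx (dL_ux KS u nu) t x =
       - c1 * exp (- t - x) * (u t x - 2 * Defs.Dx u t x)
       + (c1 * exp (- t - x) + c2) * (Defs.Dx u t x - 2 * Defs.Dx (Defs.Dx u) t x)).
    { rewrite (Dx_ext _ (fun t x => (c1 * exp (- t - x) + c2) * (u t x - 2 * Defs.Dx u t x))) by (intros; apply A3).
      unfold Defs.Dx at 1. apply is_derive_unique. auto_derive; [auto|].
      change (Derive (fun x0 => u t x0) x) with (Defs.Dx u t x).
      change (Derive (fun x0 => Defs.Dx u t x0) x) with (Defs.Dx (Defs.Dx u) t x).
      unfold Rminus; ring. }
    assert (B4' : forall y, Defs.Dx (dL_uxx KS u nu) t y =
       - (- c1 * exp (- t - y) * (1 + u t y) + (c1 * exp (- t - y) + c2) * Defs.Dx u t y)).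
    { intros y. rewrite (Dx_ext _ (fun t x => - ((c1 * exp (- t - x) + c2) * (1 + u t x)))) by (intros; apply A4).
      unfold Defs.Dx at 1. apply is_derive_unique. auto_derive; [auto|].
      change (Derive (fun x0 => u t x0) y) with (Defs.Dx u t y).
      unfold Rminus; ring. }
    assert (B4 : Defs.Dx (Defs.Dx (dL_uxx KS u nu)) t x =
       - (c1 * exp (- t - x) * (1 + u t x) - c1 * exp (- t - x) * Defs.Dx u t x
          - c1 * exp (- t - x) * Defs.Dx u t x + (c1 * exp (- t - x) + c2) * Defs.Dx (Defs.Dx u) t x)).
    { rewrite (Dx_ext _ (fun t y => - (- c1 * exp (- t - y) * (1 + u t y) + (c1 * exp (- t - y) + c2) * Defs.Dx u t y))) by (intros; apply B4').
      unfold Defs.Dx at 1. apply is_derive_unique. auto_derive; [auto|].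
      change (Derive (fun x0 => u t x0) x) with (Defs.Dx u t x).
      change (Derive (fun x0 => Defs.Dx u t x0) x) with (Defs.Dx (Defs.Dx u) t x).
      unfold Rminus; ring. }
    unfold adjoint. fold nu. rewrite A1, B2, B3, B4. unfold nu. ring.
Qed.

Theorem corollary3 :
  (forall c1 c2 : R, (c1, c2) <> (0, 0) ->
     self_adjoint_with KS (fun t x _ => c1 * exp (- t - x) + c2))
  /\ ~ strictly_self_adjoint KS.
Proof. split; [exact pos_part | exact not_strict]. Qed.
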